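(* Let $R\subseteq\mathbb{N}$ be a random set obtained by including each $n\in\mathbb{N}$ in $R$ independently with probability $1/2$. Then $R$ is rich with probability $1$.
   Context: A set $R\subseteq\mathbb{N}$ is rich if for all $s,u,v\in\mathbb{N}$, all $\bar a_0\in\{0,1\}^s\setminus\{\bar0\}$, $\bar a_1,\dots,\bar a_u\in\mathbb{N}^s$ and all $c_1,\dots,c_u\in\mathbb{N}$ with $(\bar a_0,0)\ne(\bar a_i,c_i)$ for all $i\in\{1,\dots,u\}$, there exist $\bar x,\bar y\in(v+\mathbb{N})^s$ (vectors with all entries $\ge v$) such that $\bar a_0^\top\bar x\in R\iff\bar a_0^\top\bar y\notin R$, and $\bar a_i^\top\bar x-c_i\in R\iff\bar a_i^\top\bar y-c_i\in R$ for all $i\in\{1,\dots,u\}$. *)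

(* Defs.v *)
From HB Require Import structures.
From mathcomp Require Import all_boot all_order all_algebra.
From mathcomp Require Import all_classical all_reals all_analysis.
Set Implicit Arguments. Unset Strict Implicit. Unset Printing Implicit Defensive.
Import Order.TTheory GRing.Theory Num.Theory.
Local Open Scope classical_set_scope.

Definition dotn (s : nat) (a x : 'I_s -> nat) : nat := (\sum_(j < s) a j * x j)%N.

(* "d - c \in R" for natural d, c, where d - c is the integer difference:
   it is in R (a subset of N) iff it is nonnegative and belongs to R *)
Definition shift_in (R : set nat) (d c : nat) : Prop := (c <= d)%N /\ R (d - c)%N.

Definition rich (R : set nat) : Prop :=
  forall (s u v : nat) (a0 : 'I_s -> nat) (a : 'I_u -> 'I_s -> nat) (c : 'I_u -> nat),
    (forall j, (a0 j <= 1)%N) ->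
    (exists j, a0 j <> 0%N) ->
    (forall i, ~ ((forall j, a i j = a0 j) /\ c i = 0%N)) ->
    exists x y : 'I_s -> nat,
      (forall j, (v <= x j)%N) /\ (forall j, (v <= y j)%N) /\
      (R (dotn a0 x) <-> ~ R (dotn a0 y)) /\
      (forall i, shift_in R (dotn (a i) x) (c i) <-> shift_in R (dotn (a i) y) (c i)).

Definition mutually_independent_events d (T : measurableType d) (K : realType)
    (P : probability T K) (E : nat -> set T) : Prop :=
  forall I : seq nat, uniq I ->
    P (\bigcap_(i in [set` I]) E i) = (\prod_(i <- I) P (E i))%E.

(* Main.v *)
Require Import Defs.
From HB Require Import structures.
From mathcomp Require Import all_boot all_order all_algebra.
From mathcomp Require Import all_classical all_reals all_analysis.
From mathcomp Require Import zify ring lra.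
Import Order.TTheory GRing.Theory Num.Theory numFieldNormedType.Exports.
Local Open Scope classical_set_scope.
Local Open Scope ring_scope.

Lemma leq_sumn_mem (s : seq nat) x : x \in s -> (x <= sumn s)%N.
Proof.
elim: s => [|y s IH] //=; rewrite inE => /orP[/eqP->|/IH]; first exact: leq_addr.
by move=> h; apply: (leq_trans h); exact: leq_addl.
Qed.

Arguments leq_sumn_mem {s x}.

Lemma map_fst_pair (s : seq nat) (b : bool) : [seq z.1 | z <- [seq (z, b) | z <- s]] = s.
Proof. by elim: s => //= z s ->. Qed.

Definition disj (s1 s2 : seq nat) := forall x, x \in s1 -> x \in s2 -> False.

Section Pat.
Local Open Scope nat_scope.
Variables (l : seq (nat * nat)) (e0 v : nat).
Definition Cc := sumn (map snd l).
Definition Ee := e0.+1 + sumn (map fst l).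
Definition Dd := Ee + Cc + 1.
Definition Hh := Dd * Ee + Cc + v + 1.
Definition lp := [seq ec <- l | 0 < ec.1].
Definition tv N := N * e0.+1.
Definition fls N := seq.filter (fun z => z != tv N)
  (undup ([seq N * ec.1 - ec.2 | ec <- lp] ++ [seq N * Dd * ec.1 - ec.2 | ec <- lp]
          ++ [:: N * Dd * e0.+1])).
Definition pat N := (tv N, true) :: [seq (z, false) | z <- fls N].
Definition Lsp k := pat (Hh ^ k.+1).

Lemma keys_pat N : map fst (pat N) = tv N :: fls N.
Proof. by rewrite /= map_fst_pair. Qed.

Lemma uniq_pat N : uniq (map fst (pat N)).
Proof. by rewrite keys_pat /= mem_filter eqxx /= filter_uniq // undup_uniq. Qed.

Lemma size_pat N : size (pat N) <= (2 * size l).+2.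
Proof.
rewrite /= size_map size_filter ltnS; apply: (leq_trans (count_size _ _)).
apply: (leq_trans (size_undup _)); rewrite !size_cat !size_map /=.
have : size lp <= size l by rewrite size_filter count_size.
lia.
Qed.

Lemma lp_bnd ec : ec \in lp -> [/\ 0 < ec.1, ec.1 <= Ee & ec.2 <= Cc].
Proof.
rewrite mem_filter => /andP[h1 h2]; split => //.
  have := leq_sumn_mem (map_f fst h2); rewrite /Ee /=; lia.
exact: (leq_sumn_mem (map_f snd h2)).
Qed.

Lemma Dd_ge1 : 1 <= Dd. Proof. rewrite /Dd; lia. Qed.
Lemma Ee_ge1 : 1 <= Ee. Proof. rewrite /Ee; lia. Qed.

Lemma window N z : 0 < N -> z \in map fst (pat N) -> N <= z + Cc /\ z <= N * (Dd * Ee).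
Proof.
move=> N0; rewrite keys_pat inE => /orP[/eqP->|].
  rewrite /tv; have h1 : e0.+1 <= Ee by rewrite /Ee; lia.
  have h2 : Ee <= Dd * Ee by rewrite leq_pmull // Dd_ge1.
  split; first by have := leq_pmulr N (ltn0Sn e0); lia.
  by rewrite leq_mul2l (leq_trans h1 h2) orbT.
have hD := Dd_ge1; have hE := Ee_ge1.
have h2 : Ee <= Dd * Ee by rewrite leq_pmull // Dd_ge1.
rewrite mem_filter => /andP[_]; rewrite mem_undup !mem_cat inE.
move=> /orP[/mapP[ec /lp_bnd[a1 a2 a3] ->]|/orP[/mapP[ec /lp_bnd[a1 a2 a3] ->]|/eqP->]].
- have b1 : N <= N * ec.1 by rewrite leq_pmulr.
  have b2 : N * ec.1 <= N * (Dd * Ee) by rewrite leq_mul2l (leq_trans a2 h2) orbT.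
  move: (N * ec.1) (N * (Dd * Ee)) (ec.2) Cc b1 b2 a3 => X Y c2 C b1 b2 a3; lia.
- have b1 : N <= N * Dd * ec.1 by rewrite -mulnA leq_pmulr // muln_gt0 hD.
  have b2 : N * Dd * ec.1 <= N * (Dd * Ee) by rewrite -mulnA leq_mul2l leq_mul2l a2 !orbT.
  move: (N * Dd * ec.1) (N * (Dd * Ee)) (ec.2) Cc b1 b2 a3 => X Y c2 C b1 b2 a3; lia.
- have b1 : N <= N * Dd * e0.+1 by rewrite -mulnA leq_pmulr // muln_gt0 hD.
  have b2 : N * Dd * e0.+1 <= N * (Dd * Ee).
    by rewrite -mulnA leq_mul2l leq_mul2l /Ee leq_addr !orbT.
  move: (N * Dd * e0.+1) (N * (Dd * Ee)) b1 b2 => X Y b1 b2; lia.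
Qed.

Lemma Hh_ge1 : 1 <= Hh. Proof. rewrite /Hh; lia. Qed.

Lemma uLsp k : uniq (map fst (Lsp k)). Proof. exact: uniq_pat. Qed.
Lemma sLsp k : size (Lsp k) <= (2 * size l).+2. Proof. exact: size_pat. Qed.

Lemma dLsp k k' : k < k' -> disj (map fst (Lsp k)) (map fst (Lsp k')).
Proof.
move=> kk z z1 z2.
have N0 : 0 < Hh ^ k.+1 by rewrite expn_gt0 Hh_ge1.
have N0' : 0 < Hh ^ k'.+1 by rewrite expn_gt0 Hh_ge1.
have [_ u1] := window _ _ N0 z1.
have [u2 _] := window _ _ N0' z2.
have HN : Hh * Hh ^ k.+1 <= Hh ^ k'.+1 by rewrite -expnS leq_pexp2l // Hh_ge1.
move: (Hh ^ k.+1) N0 u1 HN => N N0 u1 HN.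
have e : Hh * N = N * (Dd * Ee) + Cc * N + v * N + N.
  by rewrite /Hh; nia.
have : Cc <= Cc * N by rewrite leq_pmulr.
lia.
Qed.
End Pat.
Lemma L1 (N e e0 ci C : nat) : (0<e -> e <> e0 -> C < N -> ci <= C -> N*e - ci <> N*e0)%N.
Proof. move=> h1 h2 h3 h4. case: (ltngtP e e0) => // h5.
- have : (N * e.+1 <= N * e0)%N by rewrite leq_mul2l h5 orbT. nia.
- have : (N * e0.+1 <= N * e)%N by rewrite leq_mul2l h5 orbT. nia.
Qed.
Lemma L1' (N e ci C : nat) : (0 < e -> 0 < ci -> ci <= C -> C < N -> N*e - ci <> N*e)%N.
Proof. nia. Qed.
Lemma L2 (N D e ea0 E C ci : nat) : (D = E + C + 1 -> ea0 <= E -> 0 < e -> 0<N -> ci <= C -> N*D*e - ci <> N*ea0)%N.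
Proof.
move=> hD h1 h2 h3 h4.
have a : (N * ea0 <= N * E)%N by rewrite leq_mul2l h1 orbT.
have b : (N * D <= N * D * e)%N by rewrite leq_pmulr.
have c : (C <= N * C)%N by rewrite leq_pmull.
have d : (N * D = N * E + N * C + N)%N by rewrite hD !mulnDr muln1.
move: (N * D * e) (N * D) (N * E) (N * C) (N * ea0) a b c d => X Y Z W V; lia.
Qed.
Lemma L3 (N D e : nat) : (2 <= D -> 0 < N -> 0 < e -> N*D*e <> N*e)%N.
Proof. nia. Qed.

Lemma leq_big_ord n (F : 'I_n -> nat) j : (F j <= \sum_(i < n) F i)%N.
Proof. by rewrite (bigD1 j) //= leq_addr. Qed.

Arguments leq_big_ord {n}.

Definition enc (B : nat) {s : nat} (f : 'I_s -> nat) := (\sum_(j < s) f j * B ^ j)%N.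

Lemma enc_S B s (f : 'I_s.+1 -> nat) :
  enc B f = (f ord0 + B * enc B (fun j => f (lift ord0 j)))%N.
Proof.
rewrite /enc big_ord_recl expn0 muln1 big_distrr; congr (_ + _)%N.
by apply: eq_bigr => j _; rewrite lift0 expnS mulnCA.
Qed.

Lemma enc_inj B s (f g : 'I_s -> nat) : (0 < B)%N ->
  (forall j, f j < B)%N -> (forall j, g j < B)%N -> enc B f = enc B g -> forall j, f j = g j.
Proof.
move=> B0; elim: s f g => [|s IH] f g hf hg.
  by move=> _ [].
rewrite !enc_S => e.
have e0 : f ord0 = g ord0.
  have := congr1 (modn^~ B) e.
  by rewrite ![(_ ord0 + _)%N]addnC ![(B * _)%N]mulnC !modnMDl !modn_small.
move: e; rewrite e0 => /addnI /eqP; rewrite eqn_pmul2l // => /eqP e.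
move=> j; case: (unliftP ord0 j) => [j'|] ->; last exact: e0.
by apply: (IH (fun j => f (lift ord0 j)) (fun j => g (lift ord0 j))).
Qed.
Arguments enc_inj {B s f g}.

Section Inst.
Local Open Scope nat_scope.
Variables (s u v : nat) (a0 : 'I_s -> nat) (a : 'I_u -> 'I_s -> nat) (c : 'I_u -> nat).
Hypothesis ha1 : forall j, a0 j <= 1.
Hypothesis ha2 : exists j, a0 j <> 0.
Hypothesis ha3 : forall i, ~ ((forall j, a i j = a0 j) /\ c i = 0).

Definition BB := 2 + \sum_(i < u) \sum_(j < s) a i j.
Definition ll := [seq (enc BB (a i), c i) | i <- enum 'I_u].
Definition ee0 := (enc BB a0).-1.

Lemma inst_ok (Rw : set nat) k :
  Rw (tv ee0 (Hh ll ee0 v ^ k.+1)) ->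
  (forall z, z \in fls ll ee0 (Hh ll ee0 v ^ k.+1) -> ~ Rw z) ->
  exists x y : 'I_s -> nat,
      (forall j, (v <= x j)%N) /\ (forall j, (v <= y j)%N) /\
      (Rw (dotn a0 x) <-> ~ Rw (dotn a0 y)) /\
      (forall i, shift_in Rw (dotn (a i) x) (c i) <-> shift_in Rw (dotn (a i) y) (c i)).
Proof.
have NH : Hh ll ee0 v <= Hh ll ee0 v ^ k.+1.
  by rewrite expnS leq_pmulr // expn_gt0 Hh_ge1.
move: (Hh ll ee0 v ^ k.+1) NH => N NH hT hF.
have vN : v <= N by move: NH; rewrite /Hh; lia.
have CN : Cc ll < N by move: NH; rewrite /Hh; lia.
have N0 : 0 < N by lia.
have B0 : 0 < BB by rewrite /BB.
have ea0 : enc BB a0 = ee0.+1.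
  rewrite /ee0 prednK // /enc; case: ha2 => j hj.

  apply: (leq_trans _ (leq_big_ord (fun j => a0 j * BB ^ j) j)).
  by rewrite muln_gt0 expn_gt0 B0 andbT lt0n; apply/eqP.
have dotx f : dotn f (fun j => N * BB ^ j) = N * enc BB f.
  by rewrite /dotn /enc big_distrr; apply: eq_bigr => j _; rewrite mulnCA.
have doty f : dotn f (fun j => N * Dd ll ee0 * BB ^ j) = N * Dd ll ee0 * enc BB f.
  by rewrite /dotn /enc big_distrr; apply: eq_bigr => j _; rewrite mulnCA.
have bnda : forall i j, a i j < BB.
  move=> i j; have := leq_trans (leq_big_ord (a i) j) (leq_big_ord (fun i => \sum_(j < s) a i j) i).
  rewrite /BB; lia.
have bnda0 : forall j, a0 j < BB by move=> j; have := ha1 j; rewrite /BB; lia.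
have D2 : 2 <= Dd ll ee0 by rewrite /Dd; have := Ee_ge1 ll ee0; lia.
have Pw j : 0 < BB ^ j by rewrite expn_gt0 B0.
exists (fun j => N * BB ^ j), (fun j => N * Dd ll ee0 * BB ^ j).
split; first by move=> j; apply: (leq_trans vN); rewrite leq_pmulr.
split; first by move=> j; apply: (leq_trans vN); rewrite -mulnA leq_pmulr // muln_gt0 Pw andbT; lia.
split.
  rewrite dotx doty ea0.
  have q0 : ~ Rw (N * Dd ll ee0 * ee0.+1).
    apply: hF; rewrite /fls mem_filter mem_undup !mem_cat inE eqxx !orbT andbT.
    by apply/eqP; apply: L3.
  by split => // _; exact: hT.
move=> i; rewrite dotx doty.
case: (posnP (enc BB (a i))) => [z|pos].
  by rewrite z !muln0.
have mem_ll : (enc BB (a i), c i) \in ll by apply/mapP; exists i; rewrite ?mem_enum.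
have mem_l : (enc BB (a i), c i) \in lp ll by rewrite /lp mem_filter /= pos mem_ll.
have ciC : c i <= Cc ll.
  by apply: leq_sumn_mem; apply/mapP; exists (enc BB (a i), c i).
have nx : ~ Rw (N * enc BB (a i) - c i).
  apply: hF; rewrite /fls mem_filter mem_undup !mem_cat; apply/andP; split; last first.
    by apply/orP; left; exact: (map_f (fun ec : nat * nat => N * ec.1 - ec.2) mem_l).
  rewrite /tv; apply/eqP; case: (enc BB (a i) =P ee0.+1) => [eq|ne].
    have aeq := enc_inj B0 (bnda i) bnda0 (etrans eq (esym ea0)).
    have ci0 : 0 < c i by rewrite lt0n; apply/eqP => h; apply: (ha3 i); split.
    by rewrite eq; apply: (@L1' _ _ _ (Cc ll)).
  by apply: (@L1 _ _ _ _ (Cc ll)).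
have ny : ~ Rw (N * Dd ll ee0 * enc BB (a i) - c i).
  apply: hF; rewrite /fls mem_filter mem_undup !mem_cat; apply/andP; split; last first.
    by apply/orP; right; apply/orP; left;
      exact: (map_f (fun ec : nat * nat => N * Dd ll ee0 * ec.1 - ec.2) mem_l).
  rewrite /tv; apply/eqP; apply: (@L2 _ _ _ _ (Ee ll ee0) (Cc ll)) => //.
  by rewrite /Ee leq_addr.
by split => -[_ h]; exfalso; [exact: nx|exact: ny].
Qed.
End Inst.

Lemma geo0 (K : realType) (q y : K) : 0 <= q < 1 -> (forall n, y <= q ^+ n) -> y <= 0.
Proof.
move=> /andP[q0 q1] H.
have c : (GRing.exp q : K ^nat) @ \oo --> 0 by apply: cvg_expr; rewrite ger0_norm.
have <- := cvg_lim _ c.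
apply: limr_ge; first by apply/cvg_ex; exists 0.
by near=> n; exact: H.
Unshelve. all: by end_near.
Qed.

Section Cyl.
Context d (T : measurableType d) (R : realType) (P : probability T R) (E : nat -> set T).
Hypothesis mE : forall n, measurable (E n).
Hypothesis indE : mutually_independent_events P E.
Hypothesis hE : forall n, P (E n) = (1 / 2)%:E.

Let h : R := 1 / 2.

Fixpoint cyl (L : seq (nat * bool)) : set T :=
  if L is z :: L' then (if z.2 then E z.1 else ~` E z.1) `&` cyl L' else setT.

Lemma cyl_meas L : measurable (cyl L).
Proof.
elim: L => [|[i b] L IH] /=; first exact: measurableT.
apply: measurableI => //; case: b => //; exact: measurableC.
Qed.

Lemma cyl_cat L1 L2 : cyl (L1 ++ L2) = cyl L1 `&` cyl L2.
Proof. by elim: L1 => [|z L1 IH] /=; [rewrite setTI | rewrite IH setIA]. Qed.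

Lemma bigcapE_meas (I : seq nat) : measurable (\bigcap_(i in [set` I]) E i).
Proof.
elim: I => [|i I IH].
  have -> : [set` [::]] = @set0 nat by apply/seteqP; split => x //=.
  by rewrite bigcap_set0.
have -> : \bigcap_(j in [set` i :: I]) E j = E i `&` \bigcap_(j in [set` I]) E j.
  apply/seteqP; split => w /=.
    move=> H; split; first by apply: H; rewrite /= inE eqxx.
    by move=> j jI; apply: H; rewrite /= inE jI orbT.
  by move=> [Ei H] j /=; rewrite inE => /orP[/eqP->|/H].
exact: measurableI.
Qed.

Lemma bigcap_cons (i : nat) (I : seq nat) :
  \bigcap_(j in [set` i :: I]) E j = E i `&` \bigcap_(j in [set` I]) E j.
Proof.
apply/seteqP; split => w /=.
  move=> H; split; first by apply: H; rewrite /= inE eqxx.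
  by move=> j jI; apply: H; rewrite /= inE jI orbT.
by move=> [Ei H] j /=; rewrite inE => /orP[/eqP->|/H].
Qed.

Lemma PD (A B : set T) : measurable A -> measurable B ->
  P (A `\` B) = (P A - P (A `&` B))%E.
Proof.
move=> mA mB; apply: measureD => //.
by apply: (le_lt_trans (probability_le1 P mA)); rewrite ltry.
Qed.

Lemma PS (A B : set T) : measurable A -> measurable B -> A `<=` B ->
  (P A <= P B)%E.
Proof. by move=> mA mB AB; apply: le_measure => //; rewrite inE. Qed.

Lemma prod_const (I : seq nat) :
  (\prod_(i <- I) P (E i))%E = (h ^+ size I)%:E.
Proof.
elim: I => [|i I IH]; first by rewrite big_nil.
by rewrite big_cons IH hE -EFinM exprS.
Qed.

Lemma cyl_prob_gen (I : seq nat) L : uniq (I ++ map fst L) ->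
  P (\bigcap_(i in [set` I]) E i `&` cyl L) = (h ^+ (size I + size L))%:E.
Proof.
elim: L I => [|[i b] L IH] I /=.
  by rewrite cats0 => uI; rewrite setIT indE // prod_const addn0.
rewrite cat_uniq /= negb_or => /and3P[uI /andP[iI hL] /andP[iL uL]].
have u1 : uniq (I ++ [seq i.1 | i <- L]) by rewrite cat_uniq uI hL uL.
have u2 : uniq ((i :: I) ++ [seq i.1 | i <- L]).
  by rewrite /= mem_cat negb_or iI iL u1.
case: b => /=.
  by rewrite setIA [X in X `&` _]setIC -bigcap_cons IH //= addnS.
have -> : \bigcap_(i0 in [set` I]) E i0 `&` (~` E i `&` cyl L) =
    (\bigcap_(i0 in [set` I]) E i0 `&` cyl L) `\` E i.
  by rewrite setDE setIAC setIA.
rewrite PD //; last by apply: measurableI; [exact: bigcapE_meas|exact: cyl_meas].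
rewrite IH // setIAC [X in X `&` _]setIC -bigcap_cons IH //= -EFinB.
congr (_%:E); rewrite addnS exprS /h; lra.
Qed.

Lemma cyl_prob L : uniq (map fst L) -> P (cyl L) = (h ^+ size L)%:E.
Proof.
move=> uL; have := @cyl_prob_gen [::] L uL.
have -> : [set` [::]] = @set0 nat by apply/seteqP; split => x //=.
by rewrite bigcap_set0 setTI.
Qed.


Lemma disj_has s1 s2 : disj s1 s2 -> ~~ has (mem s1) s2.
Proof. by move=> D; apply/hasPn => x xs2; apply/negP => xs1; exact: (D x). Qed.

Variable Ls : nat -> seq (nat * bool).
Hypothesis uLs : forall k, uniq (map fst (Ls k)).
Hypothesis dLs : forall k l, (k < l)%N -> disj (map fst (Ls k)) (map fst (Ls l)).

Fixpoint failK K := if K is K'.+1 then failK K' `&` ~` cyl (Ls K') else setT.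

Lemma failK_meas K : measurable (failK K).
Proof.
elim: K => [|K IH] /=; first exact: measurableT.
by apply: measurableI => //; apply: measurableC; exact: cyl_meas.
Qed.

Lemma fail_prob K : forall L0, uniq (map fst L0) ->
  (forall k, (k < K)%N -> disj (map fst L0) (map fst (Ls k))) ->
  P (cyl L0 `&` failK K) = (h ^+ size L0 * \prod_(k < K) (1 - h ^+ size (Ls k)))%:E.
Proof.
elim: K => [|K IH] L0 uL0 D0 /=.
  by rewrite setIT cyl_prob // big_ord0 mulr1.
have -> : cyl L0 `&` (failK K `&` ~` cyl (Ls K)) = (cyl L0 `&` failK K) `\` cyl (Ls K).
  by rewrite setDE setIA.
rewrite PD; last 2 first.
- by apply: measurableI; [exact: cyl_meas|exact: failK_meas].
- exact: cyl_meas.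
have D1 : forall k, (k < K)%N -> disj (map fst L0) (map fst (Ls k)).
  by move=> k kK; apply: D0; rewrite ltnS ltnW.
rewrite IH //.
rewrite setIAC -cyl_cat IH; last 2 first.
- by rewrite map_cat cat_uniq uL0 uLs disj_has //= ?andbT; apply: D0.
- move=> k kK x; rewrite map_cat mem_cat => /orP[xL0|xLK].
    exact: (D1 k kK x xL0).
  by move=> xk; exact: (dLs k K kK x xk xLK).
rewrite -EFinB big_ord_recr /= size_cat exprD; congr (_%:E); ring.
Qed.

Lemma fail_null m : (forall k, (size (Ls k) <= m)%N) ->
  P (\bigcap_k ~` cyl (Ls k)) = 0%E.
Proof.
move=> sm.
have mF : measurable (\bigcap_k ~` cyl (Ls k)).
  by apply: bigcapT_measurable => k; apply: measurableC; exact: cyl_meas.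
have h0 : 0 <= h by rewrite /h; lra.
have h1 : h <= 1 by rewrite /h; lra.
have hm0 : 0 <= h ^+ m by exact: exprn_ge0.
have hm1 : h ^+ m <= 1 by exact: exprn_ile1.
have hmp : 0 < h ^+ m by apply: exprn_gt0; rewrite /h; lra.
have bnd : forall K, (P (\bigcap_k ~` cyl (Ls k)) <= ((1 - h ^+ m) ^+ K)%:E)%E.
  move=> K.
  apply: (le_trans (@PS _ (cyl [::] `&` failK K) mF _ _)).
  - by apply: measurableI; [exact: (cyl_meas [::])|exact: failK_meas].
  - move=> w Fw; split => //.
    elim: K => [|K IH] //=; split => //; exact: Fw.
  rewrite (@fail_prob K [::]) //= mul1r lee_fin.
  rewrite (_ : (1 - h ^+ m) ^+ K = \prod_(k < K) (1 - h ^+ m)); last first.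
    by rewrite prodr_const card_ord.
  apply: ler_prod => k _.
  apply/andP; split; first by rewrite subr_ge0 exprn_ile1.
  by rewrite lerD2l lerN2 ler_wiXn2l.
have P0 := measure_ge0 P (\bigcap_k ~` cyl (Ls k)).
have Pfin : P (\bigcap_k ~` cyl (Ls k)) \is a fin_num.
  by rewrite ge0_fin_numE // (le_lt_trans (bnd 0%N)) // ltry.
apply/eqP; rewrite eq_le P0 andbT -(fineK Pfin) lee_fin.
apply: (@geo0 _ (1 - h ^+ m)); first by apply/andP; split; [rewrite subr_ge0|rewrite ltrBlDr ltrDl].
by move=> n; rewrite -lee_fin fineK //.
Qed.


Lemma fail_negl m : (forall k, (size (Ls k) <= m)%N) ->
  P.-negligible (\bigcap_k ~` cyl (Ls k)).
Proof.
move=> sm; exists (\bigcap_k ~` cyl (Ls k)); split => //.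
  by apply: bigcapT_measurable => k; apply: measurableC; exact: cyl_meas.
exact: fail_null sm.
Qed.

End Cyl.

Lemma cyl_false d (T : measurableType d) (E : nat -> set T) (s : seq nat) w :
  @cyl _ _ E [seq (z, false) | z <- s] w -> forall z, z \in s -> ~ E z w.
Proof.
elim: s => [|y s IH] //= [h1 h2] z; rewrite inE => /orP[/eqP->|/IH]; first exact: h1.
by apply.
Qed.


Theorem proposition6p7 (d : measure_display) (T : measurableType d) (K : realType)
    (P : probability T K) (E : nat -> set T) :
  (forall n, measurable (E n)) ->
  mutually_independent_events P E ->
  (forall n, P (E n) = (1 / 2)%:E) ->
  {ae P, forall w, rich [set n | E n w]}.
Proof.
move=> mE indE hE.
pose F (δ : seq (nat * nat) * nat * nat) :=
  \bigcap_k ~` @cyl _ _ E (Lsp δ.1.1 δ.1.2 δ.2 k).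
pose G (n : nat) := if unpickle n is Some δ then F δ else set0.
have nG : P.-negligible (\bigcup_n G n).
  apply: negligible_bigcup => n; rewrite /G; case: unpickle => [δ|]; last first.
    exact: negligible_set0.
  exact: (@fail_negl d T K P E mE indE hE _ (uLsp δ.1.1 δ.1.2 δ.2) (dLsp δ.1.1 δ.1.2 δ.2) _ (sLsp δ.1.1 δ.1.2 δ.2)).
apply: (negligibleS _ nG) => w /= nR.
apply: contrapT => nGw; apply: nR => s u v a0 a c h1 h2 h3.
pose δ := (ll s u a c, ee0 s u a0 a, v).
have [k hk] : exists k, @cyl _ _ E (Lsp δ.1.1 δ.1.2 δ.2 k) w.
  apply: contrapT => nk; apply: nGw; exists (pickle δ) => //.
  rewrite /G pickleK /F => k _ hk; apply: nk; exists k; exact: hk.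
move: hk; rewrite /Lsp /pat /= => -[hT hF].
apply: (@inst_ok s u v a0 a c h1 h2 h3 [set n | E n w] k hT).
by move=> z zin; exact: (@cyl_false _ _ E _ w hF z zin).
Qed.
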